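(* Let $\mathcal{D}(A)$ be a straight-line drawing of a four-cycle $A$ with vertices $a_1,a_2,a_3,a_4$ and edges $e_k^A=a_ka_{k\bmod 4+1}$ ($k\in[4]$) as a simple quadrilateral. Call $e_k^A$ good if there is a point $p$ in the outer face of $\mathcal{D}(A)$ such that placing a new vertex $q$ at $p$ and joining it by straight-line segments to $a_1,a_2,a_3,a_4$ yields a planar straight-line drawing of $A+q$ in which $e_k^A$ is an edge on the outer face. Then at most two edges of $A$ are good. *)

(* Defs.v *)
From HB Require Import structures.
From mathcomp Require Import all_boot all_order all_algebra.
From mathcomp Require Import all_classical all_reals all_analysis.
Set Implicit Arguments. Unset Strict Implicit. Unset Printing Implicit Defensive.
Import Order.TTheory GRing.Theory Num.Theory.
Import numFieldNormedType.Exports.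
Local Open Scope classical_set_scope.
Local Open Scope ring_scope.

Section Geometry.
Variable R : realType.
Local Notation pt := (R * R)%type.

Definition seg (a b : pt) : set pt :=
  [set x | exists t : R, 0 <= t <= 1 /\
     x = ((1 - t) * a.1 + t * b.1, (1 - t) * a.2 + t * b.2)].

Definition drawing (E : Type) (ends : E -> pt * pt) : set pt :=
  [set x | exists e, seg (ends e).1 (ends e).2 x].

(* planarity of a straight-line drawing (vertex positions assumed distinct):
   two distinct edges meet exactly in their common endpoints *)
Definition planar_sl (E : Type) (ends : E -> pt * pt) : Prop :=
  forall e f : E, e <> f ->
    seg (ends e).1 (ends e).2 `&` seg (ends f).1 (ends f).2 =
    [set x | (x = (ends e).1 \/ x = (ends e).2) /\ (x = (ends f).1 \/ x = (ends f).2)].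

Definition bounded_pts (S : set pt) : Prop :=
  exists M : R, forall x, S x -> `|x.1| <= M /\ `|x.2| <= M.

Definition outer_face (D : set pt) : set pt :=
  [set p | ~ D p /\ ~ bounded_pts (@connected_component (R * R)%type (~` D) p)].

Definition succ4 (k : 'I_4) : 'I_4 := Ordinal (ltn_pmod k.+1 (isT : (0 < 4)%N)).

Definition cycle_ends (a : 'I_4 -> pt) (k : 'I_4) : pt * pt := (a k, a (succ4 k)).

(* A + q: cycle edges (inl k) and spokes q a_i (inr i) *)
Definition wheel_ends (a : 'I_4 -> pt) (q : pt) (e : 'I_4 + 'I_4) : pt * pt :=
  match e with inl k => cycle_ends a k | inr i => (q, a i) end.

Definition simple_quadrilateral (a : 'I_4 -> pt) : Prop :=
  injective a /\ planar_sl (cycle_ends a).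

Definition good_edge (a : 'I_4 -> pt) (k : 'I_4) : Prop :=
  exists p : pt,
    outer_face (drawing (cycle_ends a)) p /\
    (forall i, p <> a i) /\ planar_sl (wheel_ends a p) /\
    seg (a k) (a (succ4 k)) `<=` @closure (R * R)%type (outer_face (drawing (wheel_ends a p))).
End Geometry.

(* Main.v *)
Require Import Defs.
From HB Require Import structures.
From mathcomp Require Import all_boot all_order all_algebra.
From mathcomp Require Import all_classical all_reals all_analysis.
From mathcomp Require Import ring lra.
Set Implicit Arguments. Unset Strict Implicit. Unset Printing Implicit Defensive.
Import Order.TTheory GRing.Theory Num.Theory.
Import numFieldNormedType.Exports.
Local Open Scope classical_set_scope.
Local Open Scope ring_scope.

Section L8.
Variable R : realType.
Local Notation pt := (R * R)%type.

Definition cr (u v : pt) : R := u.1 * v.2 - u.2 * v.1.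
Definition sub (u v : pt) : pt := (u.1 - v.1, u.2 - v.2).
Definition orient (q x y : pt) : R := cr (sub x q) (sub y q).
Definition bA (q x y p : pt) : R := cr (sub p q) (sub y q) / orient q x y.
Definition bB (q x y p : pt) : R := cr (sub x q) (sub p q) / orient q x y.
Definition oTri (q x y : pt) : set pt :=
  [set p | 0 < bA q x y p /\ 0 < bB q x y p /\ bA q x y p + bB q x y p < 1].
Definition cTri (q x y : pt) : set pt :=
  [set p | 0 <= bA q x y p /\ 0 <= bB q x y p /\ bA q x y p + bB q x y p <= 1].

Lemma pairE (x : pt) (u v : R) : x.1 = u -> x.2 = v -> x = (u, v).
Proof. by case: x => /= ? ? -> ->. Qed.

Lemma aff_cont (f : pt -> R) (c1 c2 c0 : R) :
  (forall p, f p = c1 * p.1 + c2 * p.2 + c0) -> continuous f.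
Proof.
move=> fE; have -> : f = (fun p : pt => c1 * p.1 + c2 * p.2 + c0).
  by apply: funext => p; exact: fE.
move=> p; apply: cvgD; last exact: cvg_cst.
by apply: cvgD; apply: cvgMr; [exact: cvg_fst|exact: cvg_snd].
Qed.

Lemma open_pos (f : pt -> R) : continuous f -> open [set p | 0 < f p].
Proof.
move=> cf; have := @open_comp _ _ f [set x | x > 0].
by apply; [move=> x _; exact: cf|exact: open_gt].
Qed.

Lemma closed_nneg (f : pt -> R) : continuous f -> closed [set p | 0 <= f p].
Proof.
move=> cf; have := @preimage_closed _ _ f [set x | 0 <= x].
by apply; [move=> x _; exact: cf|exact: closed_ge].
Qed.

Lemma bA_cont q x y : continuous (bA q x y).
Proof.
apply: (@aff_cont _ ((y.2 - q.2) / orient q x y) (- (y.1 - q.1) / orient q x y)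
  ((- q.1 * (y.2 - q.2) + q.2 * (y.1 - q.1)) / orient q x y)) => p.
rewrite /bA /cr /sub /=; ring.
Qed.

Lemma bB_cont q x y : continuous (bB q x y).
Proof.
apply: (@aff_cont _ (- (x.2 - q.2) / orient q x y) ((x.1 - q.1) / orient q x y)
  ((q.1 * (x.2 - q.2) - q.2 * (x.1 - q.1)) / orient q x y)) => p.
rewrite /bB /cr /sub /=; ring.
Qed.

Lemma bC_cont q x y : continuous (fun p => 1 - bA q x y p - bB q x y p).
Proof.
apply: (@aff_cont _ (- ((y.2 - q.2) / orient q x y) + (x.2 - q.2) / orient q x y)
   (- (- (y.1 - q.1) / orient q x y) - (x.1 - q.1) / orient q x y)
  (1 - ((- q.1 * (y.2 - q.2) + q.2 * (y.1 - q.1)) / orient q x y)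
     - ((q.1 * (x.2 - q.2) - q.2 * (x.1 - q.1)) / orient q x y))) => p.
rewrite /bA /bB /cr /sub /=; ring.
Qed.

Lemma open_openT q x y : open (oTri q x y).
Proof.
have -> : oTri q x y = [set p | 0 < bA q x y p] `&` [set p | 0 < bB q x y p]
   `&` [set p | 0 < 1 - bA q x y p - bB q x y p].
  apply/seteqP; split => p /=.
    by case=> h1 [h2 h3]; do !split => //; lra.
  by case=> -[h1 h2] h3; do !split => //; lra.
apply: openI; [apply: openI|]; apply: open_pos;
  [exact: bA_cont|exact: bB_cont|exact: bC_cont].
Qed.

Lemma closed_closedT q x y : closed (cTri q x y).
Proof.
have -> : cTri q x y = [set p | 0 <= bA q x y p] `&` [set p | 0 <= bB q x y p]
   `&` [set p | 0 <= 1 - bA q x y p - bB q x y p].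
  apply/seteqP; split => p /=.
    by case=> h1 [h2 h3]; do !split => //; lra.
  by case=> -[h1 h2] h3; do !split => //; lra.
apply: closedI; [apply: closedI|]; apply: closed_nneg;
  [exact: bA_cont|exact: bB_cont|exact: bC_cont].
Qed.

Lemma cramer q x y p : orient q x y != 0 ->
  p = (q.1 + bA q x y p * (x.1 - q.1) + bB q x y p * (y.1 - q.1),
       q.2 + bA q x y p * (x.2 - q.2) + bB q x y p * (y.2 - q.2)).
Proof.
move=> o0; apply: pairE; rewrite /bA /bB /orient /cr /sub /= in o0 *; field => //.
Qed.

Lemma coordsE q x y p al be : orient q x y != 0 ->
  p.1 = q.1 + al * (x.1 - q.1) + be * (y.1 - q.1) ->
  p.2 = q.2 + al * (x.2 - q.2) + be * (y.2 - q.2) ->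
  bA q x y p = al /\ bB q x y p = be.
Proof.
move=> o0 h1 h2; rewrite /bA /bB /cr /sub h1 h2 /=.
rewrite /orient /cr /sub /= in o0 *; split; field => //.
Qed.

Lemma sep_open (O E : set pt) : open O -> open E ->
  (forall x, O x -> E x -> False) -> separated O E.
Proof.
move=> oO oE dis; split; apply/seteqP; split => // x [].
- move=> cx Ex; have /cx [y [Oy Ey]] : nbhs x E by apply: open_nbhs_nbhs.
  exact: (dis y).
- move=> Ox cx; have /cx [y [Ey Oy]] : nbhs x O by apply: open_nbhs_nbhs.
  exact: (dis y).
Qed.

Lemma encl0 (D O E : set pt) : open O -> open E ->
  (forall x, O x -> E x -> False) -> (forall x, ~ D x -> O x \/ E x) ->
  bounded_pts O -> forall p, O p -> ~ outer_face D p.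
Proof.
move=> oO oE dis cov [M hM] p Op [nDp nb]; apply: nb; exists M => z.
case=> C [Cp CD cC] Cz.
have CU : C `<=` O `|` E by move=> w /CD /cov.
have [CO|CE] := connected_subset (sep_open oO oE dis) CU cC.
  exact/hM/CO.
by exfalso; apply: (dis p) => //; exact: CE.
Qed.

Lemma encl (D O E : set pt) : open O -> open E ->
  (forall x, O x -> E x -> False) -> (forall x, ~ D x -> O x \/ E x) ->
  bounded_pts O -> forall p, O p -> ~ closure (outer_face D) p.
Proof.
move=> oO oE dis cov bO p Op cp.
have /cp [y [oy Oy]] : nbhs p O by apply: open_nbhs_nbhs.
exact: (encl0 oO oE dis cov bO Oy).
Qed.

Lemma bounded_sub (S T : set pt) : S `<=` T -> bounded_pts T -> bounded_pts S.
Proof. by move=> ST [M hM]; exists M => x /ST /hM. Qed.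

Lemma bounded_U (S T : set pt) : bounded_pts S -> bounded_pts T -> bounded_pts (S `|` T).
Proof.
move=> [M hM] [N hN]; exists (Num.max M N) => x [/hM|/hN] [h1 h2];
  rewrite !le_max ?h1 ?h2 ?orbT //.
Qed.

Lemma absb (A z : R) : 0 <= A <= 1 -> `|A * z| <= `|z|.
Proof.
move=> /andP[A0 A1]; rewrite normrM ger0_norm //.
by rewrite ler_piMl.
Qed.

Lemma bounded_closedT q x y : orient q x y != 0 -> bounded_pts (cTri q x y).
Proof.
move=> o0; exists (`|q.1| + `|q.2| + `|x.1 - q.1| + `|x.2 - q.2| + `|y.1 - q.1| + `|y.2 - q.2|).
move=> p [h1 [h2 h3]]; rewrite (cramer p o0) /=.
have a01 : 0 <= bA q x y p <= 1 by apply/andP; split => //; lra.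
have b01 : 0 <= bB q x y p <= 1 by apply/andP; split => //; lra.
have n1 := absb (x.1 - q.1) a01; have n2 := absb (x.2 - q.2) a01.
have n3 := absb (y.1 - q.1) b01; have n4 := absb (y.2 - q.2) b01.
have t1 := ler_normD (q.1 + bA q x y p * (x.1 - q.1)) (bB q x y p * (y.1 - q.1)).
have t2 := ler_normD q.1 (bA q x y p * (x.1 - q.1)).
have t3 := ler_normD (q.2 + bA q x y p * (x.2 - q.2)) (bB q x y p * (y.2 - q.2)).
have t4 := ler_normD q.2 (bA q x y p * (x.2 - q.2)).
have := normr_ge0 q.1; have := normr_ge0 q.2; have := normr_ge0 (x.1 - q.1).
have := normr_ge0 (x.2 - q.2); have := normr_ge0 (y.1 - q.1); have := normr_ge0 (y.2 - q.2).
move=> *; split; lra.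
Qed.

Lemma seg_pt (a b : pt) (t : R) : 0 <= t <= 1 ->
  seg a b ((1 - t) * a.1 + t * b.1, (1 - t) * a.2 + t * b.2).
Proof. by move=> ht; exists t. Qed.

Lemma seg_sym (a b x : pt) : seg a b x -> seg b a x.
Proof.
case=> t [/andP[t0 t1] ->]; exists (1 - t); split.
  by apply/andP; split; lra.
by congr pair; ring.
Qed.

Lemma planarE (E : Type) (ends : E -> pt * pt) e f x : planar_sl ends -> e <> f ->
  seg (ends e).1 (ends e).2 x -> seg (ends f).1 (ends f).2 x ->
  (x = (ends e).1 \/ x = (ends e).2) /\ (x = (ends f).1 \/ x = (ends f).2).
Proof.
move=> pl ef h1 h2.
have : (seg (ends e).1 (ends e).2 `&` seg (ends f).1 (ends f).2) x by [].
by rewrite (pl e f ef).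
Qed.

Lemma s4_4 j : succ4 (succ4 (succ4 (succ4 j))) = j.
Proof. by apply: val_inj; case: j => [[|[|[|[|m]]]] hm]. Qed.
Lemma s4_inj : injective succ4.
Proof. by apply: (can_inj (g := fun j => succ4 (succ4 (succ4 j)))) => j; rewrite s4_4. Qed.
Lemma s4_1 j : succ4 j <> j.
Proof. by case: j => [[|[|[|[|m]]]] hm] // /(congr1 val). Qed.
Lemma s4_2 j : succ4 (succ4 j) <> j.
Proof. by case: j => [[|[|[|[|m]]]] hm] // /(congr1 val). Qed.
Lemma s4_3 j : succ4 (succ4 (succ4 j)) <> j.
Proof. by case: j => [[|[|[|[|m]]]] hm] // /(congr1 val). Qed.
Lemma ord4_cases (j : 'I_4) : j = ord0 \/ j = succ4 ord0 \/ j = succ4 (succ4 ord0)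
   \/ j = succ4 (succ4 (succ4 ord0)).
Proof.
case: j => [[|[|[|[|m]]]] hm]; [left|right;left|right;right;left|right;right;right|] => //;
  by apply: val_inj.
Qed.

Lemma seg_of (q x z : pt) t : 0 <= t <= 1 -> z.1 - q.1 = t * (x.1 - q.1) ->
  z.2 - q.2 = t * (x.2 - q.2) -> seg q x z.
Proof.
move=> ht h1 h2; exists t; split => //; apply: pairE => /=.
  by rewrite -(subrK q.1 z.1) h1; ring.
by rewrite -(subrK q.2 z.2) h2; ring.
Qed.

Lemma pt_eq (x y : pt) : x.1 = y.1 -> x.2 = y.2 -> x = y.
Proof. by case: x; case: y => /= ? ? ? ? -> ->. Qed.

Lemma seg_r (a b : pt) : seg a b b.
Proof. by exists 1; split; [rewrite ler01 lexx|apply: pairE => /=; ring]. Qed.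
Lemma seg_l (a b : pt) : seg a b a.
Proof. by exists 0; split; [rewrite ler01 lexx|apply: pairE => /=; ring]. Qed.

Lemma par_ex (u w : pt) : cr u w = 0 -> u.1 != 0 \/ u.2 != 0 ->
  exists c, w.1 = c * u.1 /\ w.2 = c * u.2.
Proof.
rewrite /cr => h; have e : u.1 * w.2 = u.2 * w.1 by apply/eqP; rewrite -subr_eq0 h.
case=> [u1|u2].
  exists (w.1 / u.1); split; first by field.
  by rewrite -[w.2](mulKf u1) e; field.
exists (w.2 / u.2); split; last by field.
by rewrite -[w.1](mulKf u2) -e; field.
Qed.


Lemma cramer1 q x y z : orient q x y != 0 ->
  z.1 = q.1 + bA q x y z * (x.1 - q.1) + bB q x y z * (y.1 - q.1).
Proof. by move=> o0; rewrite {1}(cramer z o0). Qed.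
Lemma cramer2 q x y z : orient q x y != 0 ->
  z.2 = q.2 + bA q x y z * (x.2 - q.2) + bB q x y z * (y.2 - q.2).
Proof. by move=> o0; rewrite {1}(cramer z o0). Qed.

Lemma L1 q x y z (al be : R) : orient q x y != 0 -> 0 < al -> 0 < be ->
  z.1 = q.1 + al * (x.1 - q.1) + be * (y.1 - q.1) ->
  z.2 = q.2 + al * (x.2 - q.2) + be * (y.2 - q.2) ->
  (forall p, seg q z p -> seg x y p -> p = x \/ p = y) -> al + be < 1.
Proof.
move=> o0 a0 b0 z1 z2 pl; rewrite ltNge; apply/negP => hS.
have S0 : al + be != 0 by rewrite gt_eqF //; lra.
pose p : pt := (q.1 + (al * (x.1 - q.1) + be * (y.1 - q.1)) / (al + be),
                q.2 + (al * (x.2 - q.2) + be * (y.2 - q.2)) / (al + be)).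
have sp1 : seg q z p.
  apply: (seg_of (t := (al + be)^-1)).
  - by rewrite invr_ge0 invf_le1; lra.
  - by rewrite z1 /=; field.
  - by rewrite z2 /=; field.
have sp2 : seg x y p.
  exists (be / (al + be)); split.
    apply/andP; split; first by apply: divr_ge0; lra.
    by rewrite ler_pdivrMr; lra.
  by apply: pt_eq => /=; field.
have e1 : p.1 - x.1 = be / (al + be) * (y.1 - x.1) by rewrite /=; field.
have e2 : p.2 - x.2 = be / (al + be) * (y.2 - x.2) by rewrite /=; field.
have f1 : p.1 - y.1 = al / (al + be) * (x.1 - y.1) by rewrite /=; field.
have f2 : p.2 - y.2 = al / (al + be) * (x.2 - y.2) by rewrite /=; field.
have xy : x = y -> False.
  by move=> exy; move: o0; rewrite exy /orient /cr /sub /= mulrC subrr eqxx.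
have bS : be / (al + be) != 0 by rewrite mulf_neq0 ?invr_eq0 ?S0 ?(lt0r_neq0 b0).
have aS : al / (al + be) != 0 by rewrite mulf_neq0 ?invr_eq0 ?S0 ?(lt0r_neq0 a0).
case: (pl p sp1 sp2) => e; apply: xy; apply: pt_eq.
- apply/eqP; rewrite eq_sym -subr_eq0; apply/eqP; apply: (mulfI bS).
  by rewrite mulr0 -e1 e subrr.
- apply/eqP; rewrite eq_sym -subr_eq0; apply/eqP; apply: (mulfI bS).
  by rewrite mulr0 -e2 e subrr.
- apply/eqP; rewrite -subr_eq0; apply/eqP; apply: (mulfI aS).
  by rewrite mulr0 -f1 e subrr.
- apply/eqP; rewrite -subr_eq0; apply/eqP; apply: (mulfI aS).
  by rewrite mulr0 -f2 e subrr.
Qed.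

Definition gT (a b : R) := if b <= 0 then a / (a - b) else 2.

Lemma gT_prop (a b : R) : 0 < a ->
  [/\ 0 < gT a b, (b <= 0 -> gT a b <= 1 /\ (1 - gT a b) * a + gT a b * b = 0) &
     forall t, 0 <= t -> t <= gT a b -> t <= 1 -> 0 <= (1 - t) * a + t * b].
Proof.
move=> a0; rewrite /gT; case: ifP => hb.
  have ab : 0 < a - b by lra.
  split.
  - by apply: divr_gt0.
  - move=> _; split; first by rewrite ler_pdivrMr //; lra.
    by field; rewrite gt_eqF.
  - move=> t t0; rewrite ler_pdivlMr // => ht _; nra.
move/negbT: hb; rewrite -ltNge => hb; split; [lra|move=> ?; exfalso; lra|].
by move=> t t0 _ t1; nra.
Qed.

Lemma exit3 (a1 a2 a3 b1 b2 b3 : R) : 0 < a1 -> 0 < a2 -> 0 < a3 ->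
  b1 <= 0 \/ b2 <= 0 \/ b3 <= 0 ->
  exists t, [/\ 0 <= t <= 1, 0 <= (1 - t) * a1 + t * b1,
    0 <= (1 - t) * a2 + t * b2, 0 <= (1 - t) * a3 + t * b3 &
    (1 - t) * a1 + t * b1 = 0 \/ (1 - t) * a2 + t * b2 = 0 \/ (1 - t) * a3 + t * b3 = 0].
Proof.
move=> a10 a20 a30 hB.
have [P1 Q1 S1] := gT_prop b1 a10; have [P2 Q2 S2] := gT_prop b2 a20.
have [P3 Q3 S3] := gT_prop b3 a30.
have T1 : 1 < gT a1 b1 -> 0 < b1 by case: (lerP b1 0) => [hb h|//]; have := (Q1 hb).1; lra.
have T2 : 1 < gT a2 b2 -> 0 < b2 by case: (lerP b2 0) => [hb h|//]; have := (Q2 hb).1; lra.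
have T3 : 1 < gT a3 b3 -> 0 < b3 by case: (lerP b3 0) => [hb h|//]; have := (Q3 hb).1; lra.
have [t [te [tl1 [tl2 tl3]]]] : exists t, (t = gT a1 b1 \/ t = gT a2 b2 \/ t = gT a3 b3)
    /\ t <= gT a1 b1 /\ t <= gT a2 b2 /\ t <= gT a3 b3.
  case: (lerP (gT a1 b1) (gT a2 b2)) => h12; case: (lerP (gT a1 b1) (gT a3 b3)) => h13;
  case: (lerP (gT a2 b2) (gT a3 b3)) => h23;
  first [exists (gT a1 b1); split; [by left|lra] | exists (gT a2 b2); split; [by right;left|lra]
        | exists (gT a3 b3); split; [by right;right|lra]].
have m1 : t <= 1.
  case: hB => [/Q1[h _]|[/Q2[h _]|/Q3[h _]]]; lra.
have t0 : 0 < t by case: te => [->|[->|->]].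
exists t; split.
- by apply/andP; split => //; apply: ltW.
- exact: S1 (ltW t0) tl1 m1.
- exact: S2 (ltW t0) tl2 m1.
- exact: S3 (ltW t0) tl3 m1.
move: te.
case=> [e|[e|e]].
- left; have hb : b1 <= 0.
    case: (lerP b1 0) => // hb; exfalso.
    have g2 : gT a1 b1 = 2 by rewrite /gT leNgt hb.
    lra.
  by have [_] := Q1 hb; rewrite e.
- right; left; have hb : b2 <= 0.
    case: (lerP b2 0) => // hb; exfalso.
    have g2 : gT a2 b2 = 2 by rewrite /gT leNgt hb.
    lra.
  by have [_] := Q2 hb; rewrite e.
- right; right; have hb : b3 <= 0.
    case: (lerP b3 0) => // hb; exfalso.
    have g2 : gT a3 b3 = 2 by rewrite /gT leNgt hb.
    lra.
  by have [_] := Q3 hb; rewrite e.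
Qed.
End L8.

Section L8b.
Variable R : realType.
Local Notation pt := (R * R)%type.

Lemma L2 (q x y z1 z2 : pt) : orient q x y != 0 -> oTri q x y z1 -> ~ oTri q x y z2 ->
  exists p, seg z1 z2 p /\ (seg q y p \/ seg q x p \/ seg x y p).
Proof.
move=> o0 [h1 [h2 h3]] nz.
have hb : bA q x y z2 <= 0 \/ bB q x y z2 <= 0 \/ 1 - bA q x y z2 - bB q x y z2 <= 0.
  case: (lerP (bA q x y z2) 0) => [|ha]; first by left.
  case: (lerP (bB q x y z2) 0) => [|hb]; first by right; left.
  case: (lerP (1 - bA q x y z2 - bB q x y z2) 0) => [|hc]; first by right; right.
  by exfalso; apply: nz; split => //; split => //; lra.
have h3' : 0 < 1 - bA q x y z1 - bB q x y z1 by lra.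
have [t [t01 g1 g2 g3 gz]] := exit3 h1 h2 h3' hb.
exists ((1 - t) * z1.1 + t * z2.1, (1 - t) * z1.2 + t * z2.2); split; first by exists t.
have e1 : (1 - t) * z1.1 + t * z2.1 - q.1 =
   ((1 - t) * bA q x y z1 + t * bA q x y z2) * (x.1 - q.1) +
   ((1 - t) * bB q x y z1 + t * bB q x y z2) * (y.1 - q.1).
  by rewrite {1}(cramer1 z1 o0) {1}(cramer1 z2 o0); ring.
have e2 : (1 - t) * z1.2 + t * z2.2 - q.2 =
   ((1 - t) * bA q x y z1 + t * bA q x y z2) * (x.2 - q.2) +
   ((1 - t) * bB q x y z1 + t * bB q x y z2) * (y.2 - q.2).
  by rewrite {1}(cramer2 z1 o0) {1}(cramer2 z2 o0); ring.
case: gz => [gA|[gB|gC]].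
- left; apply: (seg_of (t := (1 - t) * bB q x y z1 + t * bB q x y z2)) => /=.
  + by apply/andP; split; lra.
  + by rewrite e1 gA; ring.
  + by rewrite e2 gA; ring.
- right; left; apply: (seg_of (t := (1 - t) * bA q x y z1 + t * bA q x y z2)) => /=.
  + by apply/andP; split; lra.
  + by rewrite e1 gB; ring.
  + by rewrite e2 gB; ring.
- right; right; exists ((1 - t) * bB q x y z1 + t * bB q x y z2); split.
  + by apply/andP; split; lra.
  have eA : (1 - t) * bA q x y z1 + t * bA q x y z2 =
     1 - ((1 - t) * bB q x y z1 + t * bB q x y z2) by lra.
  apply: pt_eq => /=.
  + by rewrite -[LHS](subrK q.1) e1 eA; ring.
  + by rewrite -[LHS](subrK q.2) e2 eA; ring.
Qed.


Lemma trans3 (u v w d : pt) : 0 < cr u v -> 0 < cr v w ->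
  (0 < cr u d /\ 0 < cr v d /\ 0 < cr w d) \/ (cr u d < 0 /\ cr v d < 0 /\ cr w d < 0) ->
  0 < cr u w.
Proof.
move=> h1 h2 hs.
have id : cr u v * cr w d + cr v w * cr u d = cr u w * cr v d by rewrite /cr; ring.
case: hs => [[p1 [p2 p3]]|[p1 [p2 p3]]].
- have : 0 < cr u w * cr v d by rewrite -id; apply: addr_gt0; apply: mulr_gt0.
  by rewrite pmulr_lgt0.
- have : cr u w * cr v d < 0 by rewrite -id; nra.
  nra.
Qed.

Lemma hp4 (v0 v1 v2 v3 d : pt) : 0 < cr v0 v1 -> 0 < cr v1 v2 -> 0 < cr v2 v3 -> 0 < cr v3 v0 ->
  (0 < cr v0 d /\ 0 < cr v1 d /\ 0 < cr v2 d /\ 0 < cr v3 d) \/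
  (cr v0 d < 0 /\ cr v1 d < 0 /\ cr v2 d < 0 /\ cr v3 d < 0) -> False.
Proof.
move=> h01 h12 h23 h30 hs.
have h02 : 0 < cr v0 v2 by apply: (trans3 (v := v1) (d := d)) => //; case: hs => [[? [? [? ?]]]|[? [? [? ?]]]]; [left|right]; lra.
have h03 : 0 < cr v0 v3 by apply: (trans3 (v := v2) (d := d)) => //; case: hs => [[? [? [? ?]]]|[? [? [? ?]]]]; [left|right]; lra.
have : cr v0 v3 = - cr v3 v0 by rewrite /cr; ring.
lra.
Qed.

Lemma bAq (q x y : pt) : bA q x y q = 0.
Proof. by rewrite /bA /cr /sub !subrr !mul0r subrr mul0r. Qed.
Lemma bBq (q x y : pt) : bB q x y q = 0.
Proof. by rewrite /bB /cr /sub !subrr !mulr0 subrr mul0r. Qed.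

Lemma nbhs_pos (f : pt -> R) p : continuous f -> 0 < f p -> nbhs p [set x | 0 < f x].
Proof. by move=> cf fp; apply: open_nbhs_nbhs; split => //; exact: open_pos. Qed.

Lemma sign_trans (X Y Z W : R) : X * Y = - (Z * W) -> 0 < Y * W -> Z < 0 -> 0 < X.
Proof.
move=> h yw z0.
have W0 : W != 0 by apply/negP => /eqP w0; move: yw; rewrite w0 mulr0 ltxx.
have ww : 0 < W * W by rewrite lt_def mulf_neq0 //= -expr2 sqr_ge0.
have : 0 < X * (Y * W).
  rewrite mulrA h mulNr -mulrA -mulNr; apply: mulr_gt0 => //; lra.
by rewrite pmulr_lgt0.
Qed.

Lemma opp_alg (x0 y0 x1 y1 x2 y2 x3 y3 s t u v : R) :
  x0 + s * (x3 - x0) = x1 + t * (x2 - x1) -> y0 + s * (y3 - y0) = y1 + t * (y2 - y1) ->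
  x2 + u * (x1 - x2) = x3 + v * (x0 - x3) -> y2 + u * (y1 - y2) = y3 + v * (y0 - y3) ->
  (x1 - x0) * (y2 - y0) - (y1 - y0) * (x2 - x0) != 0 -> s + v = 1 /\ t + u = 1.
Proof.
move=> E1 E2 E3 E4 C0.
have W1 : x1 - x0 = s * (x3 - x0) - t * (x2 - x1) by lra.
have W2 : y1 - y0 = s * (y3 - y0) - t * (y2 - y1) by lra.
have W3 : x1 - x0 = (1 - v) * (x3 - x0) - (1 - u) * (x2 - x1) by lra.
have W4 : y1 - y0 = (1 - v) * (y3 - y0) - (1 - u) * (y2 - y1) by lra.
set K := (x3 - x0) * (y2 - y1) - (y3 - y0) * (x2 - x1).
have CE : (x1 - x0) * (y2 - y0) - (y1 - y0) * (x2 - x0) =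
          (x1 - x0) * (y2 - y1) - (y1 - y0) * (x2 - x1) by ring.
have C1 : (x1 - x0) * (y2 - y1) - (y1 - y0) * (x2 - x1) = s * K by rewrite W1 W2 /K; ring.
have C2 : (x1 - x0) * (y2 - y1) - (y1 - y0) * (x2 - x1) = (1 - v) * K by rewrite W3 W4 /K; ring.
have K0 : K != 0 by apply: contraNneq C0 => K0; rewrite CE C1 K0 mulr0.
have D1 : (x1 - x0) * (y3 - y0) - (y1 - y0) * (x3 - x0) = t * K by rewrite W1 W2 /K; ring.
have D2 : (x1 - x0) * (y3 - y0) - (y1 - y0) * (x3 - x0) = (1 - u) * K by rewrite W3 W4 /K; ring.
split.
- have : s * K = (1 - v) * K by rewrite -C1 -C2.
  by move/(mulIf K0) => ->; ring.
- have : t * K = (1 - u) * K by rewrite -D1 -D2.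
  by move/(mulIf K0) => ->; ring.
Qed.

Lemma ray (q p0 p1 p2 p3 : pt) : orient q p0 p1 != 0 -> oTri q p0 p1 p2 -> oTri q p0 p1 p3 ->
  exists s t, [/\ 0 < s, 0 < t, p0.1 + s * (p3.1 - p0.1) = p1.1 + t * (p2.1 - p1.1),
     p0.2 + s * (p3.2 - p0.2) = p1.2 + t * (p2.2 - p1.2) &
     (p1.1 - p0.1) * (p2.2 - p0.2) - (p1.2 - p0.2) * (p2.1 - p0.1) != 0].
Proof.
move=> o0 [a2 [b2 s2]] [a3 [b3 s3]].
have e21 := cramer1 p2 o0; have e22 := cramer2 p2 o0.
have e31 := cramer1 p3 o0; have e32 := cramer2 p3 o0.
move: a2 b2 s2 a3 b3 s3 e21 e22 e31 e32.
move: (bA q p0 p1 p2) (bB q p0 p1 p2) (bA q p0 p1 p3) (bB q p0 p1 p3) => A2 B2 A3 B3.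
move=> a2 b2 s2 a3 b3 s3 e21 e22 e31 e32.
have dpos : 0 < (1 - A3) * (1 - B2) - B3 * A2 by nra.
have d0 : (1 - A3) * (1 - B2) - B3 * A2 != 0 by rewrite gt_eqF.
exists (((1 - B2) - A2) / ((1 - A3) * (1 - B2) - B3 * A2)).
exists (((1 - A3) - B3) / ((1 - A3) * (1 - B2) - B3 * A2)).
split.
- by apply: divr_gt0 => //; lra.
- by apply: divr_gt0 => //; lra.
- by rewrite e21 e31; field.
- by rewrite e22 e32; field.
- have -> : (p1.1 - p0.1) * (p2.2 - p0.2) - (p1.2 - p0.2) * (p2.1 - p0.1) =
     (1 - A2 - B2) * orient q p0 p1 by rewrite e21 e22 /orient /cr /sub /=; ring.
  by rewrite mulf_neq0 // gt_eqF //; lra.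
Qed.

Definition mid (u w : pt) : pt := ((u.1 + w.1) / 2, (u.2 + w.2) / 2).

Lemma two_neq0 : (2 : R) != 0. Proof. by rewrite pnatr_eq0. Qed.

Lemma bA_mid q x y u w : orient q x y != 0 ->
  bA q x y (mid u w) = (bA q x y u + bA q x y w) / 2.
Proof. by move=> o0; rewrite /bA /mid /cr /sub /=; field; exact: o0. Qed.
Lemma bB_mid q x y u w : orient q x y != 0 ->
  bB q x y (mid u w) = (bB q x y u + bB q x y w) / 2.
Proof. by move=> o0; rewrite /bB /mid /cr /sub /=; field; exact: o0. Qed.

Lemma bA_x (q x y : pt) : orient q x y != 0 -> bA q x y x = 1.
Proof. by move=> o0; rewrite /bA divff. Qed.
Lemma cr_same (u : pt) : cr u u = 0.
Proof. by rewrite /cr mulrC subrr. Qed.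
Lemma bB_x (q x y : pt) : bB q x y x = 0.
Proof. by rewrite /bB cr_same mul0r. Qed.
Lemma bA_y (q x y : pt) : bA q x y y = 0.
Proof. by rewrite /bA cr_same mul0r. Qed.
Lemma bB_y (q x y : pt) : orient q x y != 0 -> bB q x y y = 1.
Proof. by move=> o0; rewrite /bB divff. Qed.

Lemma seg_mid (u w : pt) : seg u w (mid u w).
Proof.
exists (2^-1); split.
  by apply/andP; split; [rewrite invr_ge0 ler0n|rewrite invf_le1 ?ler1n ?ltr0n].
by apply: pt_eq; rewrite /mid /=; field.
Qed.
Section Wheel.
Variables (a : 'I_4 -> pt) (q : pt).
Hypotheses (inj : injective a) (plA : planar_sl (cycle_ends a))
  (plW : planar_sl (wheel_ends a q)) (qa : forall i, q <> a i).

Local Notation s := succ4.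
Definition o j := orient q (a j) (a (s j)).

Lemma neq_of i j : i <> j -> a i <> a j.
Proof. by move=> ij /inj. Qed.

Lemma spokes i i' x : i <> i' -> seg q (a i) x -> seg q (a i') x -> x = q.
Proof.
move=> ii h1 h2.
have ne : (inr i : 'I_4 + 'I_4) <> inr i' by move=> [] e; apply: ii.
have [[->|e1] [e2|e2]] := planarE plW ne h1 h2 => //=.
by exfalso; apply: ii; apply: inj; rewrite /= in e1 e2; rewrite -e1 -e2.
Qed.

Lemma spoke_edge i j x : seg q (a i) x -> seg (a j) (a (s j)) x ->
  (x = q \/ x = a i) /\ (x = a j \/ x = a (s j)).
Proof.
move=> h1 h2; have ne : (inr i : 'I_4 + 'I_4) <> inl j by [].
exact: (planarE plW ne h1 h2).
Qed.

Lemma spoke_par i i' (c : R) : i <> i' -> 0 < c -> (a i').1 - q.1 = c * ((a i).1 - q.1) ->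
  (a i').2 - q.2 = c * ((a i).2 - q.2) -> False.
Proof.
move=> ii c0 h1 h2; have [c1|c1] := lerP c 1.
  have s1 : seg q (a i) (a i') by apply: (seg_of (t := c)) => //; rewrite c1 ltW.
  have s2 : seg q (a i') (a i') by apply: seg_r.
  exact: (@qa i' (esym (spokes ii s1 s2))).
have cn : c != 0 by rewrite gt_eqF.
have s1 : seg q (a i') (a i).
  apply: (seg_of (t := c^-1)).
  - by rewrite invr_ge0 ltW //= invf_le1 // ltW.
  - by rewrite h1 mulrA mulVf // mul1r.
  - by rewrite h2 mulrA mulVf // mul1r.
have s2 : seg q (a i) (a i) by apply: seg_r.
exact: (@qa i (esym (spokes (fun e => ii (esym e)) s1 s2))).
Qed.

Lemma o_neq0 j : o j != 0.
Proof.
apply/negP => /eqP h.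
have nz : (sub (a j) q).1 != 0 \/ (sub (a j) q).2 != 0.
  case: (boolP ((sub (a j) q).1 == 0)) => [/eqP e1|]; last by left.
  case: (boolP ((sub (a j) q).2 == 0)) => [/eqP e2|]; last by right.
  exfalso; apply: (@qa j); apply: pt_eq; rewrite /sub /= in e1 e2; lra.
have [c [c1 c2]] := par_ex h nz; rewrite /sub /= in c1 c2.
have [c0|c0|c0] := ltgtP c 0; last first.
- apply: (@qa (s j)); apply: pt_eq;
  [rewrite -(subrK q.1 (a (s j)).1) c1 c0|rewrite -(subrK q.2 (a (s j)).2) c2 c0]; ring.
- exact: (spoke_par (fun e => @s4_1 j (esym e)) c0 c1 c2).
have sq : seg (a j) (a (s j)) q.
  exists ((1 - c)^-1); split.
    by apply/andP; split; [rewrite invr_ge0; lra|rewrite invf_le1; lra].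
  have c1n : 1 - c != 0 by rewrite gt_eqF //; lra.
  apply: pairE => /=;
  [rewrite -(subrK q.1 (a (s j)).1) c1|rewrite -(subrK q.2 (a (s j)).2) c2]; by field.
have sq2 : seg q (a j) q by apply: seg_l.
by have [_ [/qa|/qa]] := spoke_edge sq2 sq.
Qed.


Lemma neqa1 j : [/\ a j <> a (s j), a j <> a (s (s j)) & a j <> a (s (s (s j)))].
Proof.
split => /inj.
- exact/nesym/s4_1.
- exact/nesym/s4_2.
- exact/nesym/s4_3.
Qed.
Lemma neqa2 j : [/\ a (s j) <> a (s (s j)), a (s j) <> a (s (s (s j))) &
   a (s (s j)) <> a (s (s (s j)))].
Proof.
split => /inj.
- by move/s4_inj; apply/nesym/s4_1.
- by move/s4_inj; apply/nesym/s4_2.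
- by move/s4_inj/s4_inj; apply/nesym/s4_1.
Qed.

Lemma qneq j : [/\ q <> a j, q <> a (s j), q <> a (s (s j)) & q <> a (s (s (s j)))].
Proof. by split; apply: qa. Qed.

Ltac dis j := have [? ? ?] := neqa1 j; have [? ? ?] := neqa2 j; have [? ? ? ?] := qneq j; congruence.

Lemma edges_opp j x : seg (a j) (a (s j)) x -> seg (a (s (s j))) (a (s (s (s j)))) x -> False.
Proof.
move=> h1 h2; have ne : j <> s (s j) by apply/nesym/s4_2.
have [e1 e2] := planarE (e := j) (f := s (s j)) plA ne h1 h2; rewrite /= in e1 e2.
case: e1 => e1; case: e2 => e2; dis j.
Qed.

Definition outer j := oTri q (a j) (a (s j)) (a (s (s j))) /\
   oTri q (a j) (a (s j)) (a (s (s (s j)))).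

Lemma L2use j : oTri q (a j) (a (s j)) (a (s (s j))) ->
   oTri q (a j) (a (s j)) (a (s (s (s j)))).
Proof.
move=> h; apply: contrapT => nh.
have [p [sp hp]] := L2 (o_neq0 j) h nh.
case: hp => [hp|[hp|hp]].
- have [e1 e2] := spoke_edge hp sp; case: e1 => e1; case: e2 => e2; dis j.
- have [e1 e2] := spoke_edge hp sp; case: e1 => e1; case: e2 => e2; dis j.
- exact: (edges_opp hp sp).
Qed.

Lemma L2use' j : oTri q (a j) (a (s j)) (a (s (s (s j)))) ->
   oTri q (a j) (a (s j)) (a (s (s j))).
Proof.
move=> h; apply: contrapT => nh.
have [p [sp hp]] := L2 (o_neq0 j) h nh.
have sp' := seg_sym sp.
case: hp => [hp|[hp|hp]].
- have [e1 e2] := spoke_edge hp sp'; case: e1 => e1; case: e2 => e2; dis j.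
- have [e1 e2] := spoke_edge hp sp'; case: e1 => e1; case: e2 => e2; dis j.
- exact: (edges_opp hp sp').
Qed.

Lemma pos_div (x y : R) : 0 < x * y -> 0 < x / y.
Proof.
move=> h; have y0 : y != 0 by apply/negP => /eqP y0; move: h; rewrite y0 mulr0 ltxx.
have -> : x / y = (x * y) / (y * y) by field.
by apply: divr_gt0 => //; rewrite lt_def mulf_neq0 //= -expr2 sqr_ge0.
Qed.

Lemma step2 j : o j * o (s j) < 0 -> outer j \/ outer (s j).
Proof.
move=> hj.
have oj := o_neq0 j; have osj := o_neq0 (s j).
pose D := cr (sub (a (s j)) q) (sub (a j) q).
have DE : D = - o j by rewrite /D /o /orient /cr; ring.
have D0 : D != 0 by rewrite DE oppr_eq0.
pose be := o (s j) / D.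
pose al := cr (sub (a (s (s j))) q) (sub (a j) q) / D.
have be0 : 0 < be by apply: pos_div; rewrite DE; nra.
have i1 : (a (s (s j))).1 - q.1 = al * ((a (s j)).1 - q.1) + be * ((a j).1 - q.1).
  by rewrite /al /be /D /o /orient /cr /sub /=; field; rewrite /D /cr /sub in D0.
have i2 : (a (s (s j))).2 - q.2 = al * ((a (s j)).2 - q.2) + be * ((a j).2 - q.2).
  by rewrite /al /be /D /o /orient /cr /sub /=; field; rewrite /D /cr /sub in D0.
have [al0|al0|al0] := ltgtP al 0; last first.
- exfalso; have ne : j <> s (s j) by apply/nesym/s4_2.
  by apply: (spoke_par ne be0); [rewrite i1 al0; ring|rewrite i2 al0; ring].
- left.
  have z1 : (a (s (s j))).1 = q.1 + be * ((a j).1 - q.1) + al * ((a (s j)).1 - q.1).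
    by rewrite -[LHS](subrK q.1) i1; ring.
  have z2 : (a (s (s j))).2 = q.2 + be * ((a j).2 - q.2) + al * ((a (s j)).2 - q.2).
    by rewrite -[LHS](subrK q.2) i2; ring.
  have hs : be + al < 1.
    apply: (@L1 _ q (a j) (a (s j)) (a (s (s j))) be al oj be0 al0 z1 z2).
    by move=> p h1 h2; have [_] := spoke_edge h1 h2.
  have [cA cB] := @coordsE _ q (a j) (a (s j)) (a (s (s j))) be al oj z1 z2.
  have h : oTri q (a j) (a (s j)) (a (s (s j))) by rewrite /oTri /= cA cB.
  by split => //; apply: L2use.
- right.
  have be1 : be != 0 by rewrite gt_eqF.
  have k1 : (a j).1 = q.1 + (- al / be) * ((a (s j)).1 - q.1) + be^-1 * ((a (s (s j))).1 - q.1).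
    by rewrite i1; field.
  have k2 : (a j).2 = q.2 + (- al / be) * ((a (s j)).2 - q.2) + be^-1 * ((a (s (s j))).2 - q.2).
    by rewrite i2; field.
  have p1 : 0 < - al / be by apply: divr_gt0 => //; lra.
  have p2 : 0 < be^-1 by rewrite invr_gt0.
  have hs : - al / be + be^-1 < 1.
    apply: (@L1 _ q (a (s j)) (a (s (s j))) (a j) _ _ osj p1 p2 k1 k2).
    by move=> p h1 h2; have [_] := spoke_edge h1 h2.
  have [cA cB] := @coordsE _ q (a (s j)) (a (s (s j))) (a j) _ _ osj k1 k2.
  have h : oTri q (a (s j)) (a (s (s j))) (a (s (s (s (s j))))).
    by rewrite s4_4 /oTri /= cA cB.
  by split => //; apply: L2use'.
Qed.

Lemma GM : (exists j, outer j) \/ (forall j, 0 < o j) \/ (forall j, o j < 0).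
Proof.
case: (pselect (exists j, o j * o (s j) < 0)) => [[j hj]|h].
  by left; case: (step2 hj) => ?; [exists j|exists (s j)].
have pos : forall j, 0 < o j * o (s j).
  move=> j; rewrite lt_def mulf_neq0 ?o_neq0 //=; rewrite leNgt; apply/negP => hn.
  by apply: h; exists j.
have p0 := pos ord0; have p1 := pos (s ord0); have p2 := pos (s (s ord0)).
have [g0|g0|g0] := ltgtP (o ord0) 0; last by have := o_neq0 ord0; rewrite g0 eqxx.
- right; right => j.
  have e1 : o (s ord0) < 0 by nra.
  have e2 : o (s (s ord0)) < 0 by nra.
  have e3 : o (s (s (s ord0))) < 0 by nra.
  by case: (ord4_cases j) => [->|[->|[->|->]]].
- right; left => j.
  have e1 : 0 < o (s ord0) by nra.
  have e2 : 0 < o (s (s ord0)) by nra.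
  have e3 : 0 < o (s (s (s ord0))) by nra.
  by case: (ord4_cases j) => [->|[->|[->|->]]].
Qed.

Definition Af j p := bA q (a j) (a (s j)) p.
Definition Bf j p := bB q (a j) (a (s j)) p.
Definition cc j p := cr (sub (a j) q) (sub p q).

Lemma AfE j p : Af j p * o j = - cc (s j) p.
Proof. by rewrite /Af /bA divfK ?o_neq0 // /cc /cr; ring. Qed.
Lemma BfE j p : Bf j p * o j = cc j p.
Proof. by rewrite /Bf /bB divfK ?o_neq0. Qed.

Lemma cov : (forall j, 0 < o j) \/ (forall j, o j < 0) ->
  forall p, exists j, 0 <= Af j p /\ 0 <= Bf j p.
Proof.
move=> sg p; apply: contrapT => nh.
have f : forall j, Af j p < 0 \/ Bf j p < 0.
  move=> j; case: (lerP 0 (Af j p)) => ha; last by left.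
  case: (lerP 0 (Bf j p)) => hb; last by right.
  by exfalso; apply: nh; exists j.
set j0 := @ord0 3.
have o4 : o (s (s (s j0))) = cr (sub (a (s (s (s j0)))) q) (sub (a j0) q).
  by rewrite /o /orient s4_4.
have c4 : cc (s (s (s (s j0)))) p = cc j0 p by rewrite s4_4.
case: sg => sg.
- have g : forall j, 0 < cc (s j) p \/ cc j p < 0.
    move=> j; have := AfE j p; have := BfE j p; have := sg j.
    case: (f j) => h; [left|right]; nra.
  have g0 := g j0; have g1 := g (s j0); have g2 := g (s (s j0)); have g3 := g (s (s (s j0))).
  rewrite c4 in g3.
  have := sg j0; have := sg (s j0); have := sg (s (s j0)); have := sg (s (s (s j0))).
  rewrite o4 => s3 s2 s1 s0.
  apply: (hp4 s0 s1 s2 s3 (d := sub p q)); rewrite /cc in g0 g1 g2 g3; lra.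
- have g : forall j, cc (s j) p < 0 \/ 0 < cc j p.
    move=> j; have := AfE j p; have := BfE j p; have := sg j.
    case: (f j) => h; [left|right]; nra.
  have g0 := g j0; have g1 := g (s j0); have g2 := g (s (s j0)); have g3 := g (s (s (s j0))).
  rewrite c4 in g3.
  have := sg j0; have := sg (s j0); have := sg (s (s j0)); have := sg (s (s (s j0))).
  rewrite o4 /o /orient => s3 s2 s1 s0.
  have r3 : 0 < cr (sub (a j0) q) (sub (a (s (s (s j0)))) q).
    by move: s3; rewrite /cr; lra.
  have r2 : 0 < cr (sub (a (s (s (s j0)))) q) (sub (a (s (s j0))) q).
    by move: s2; rewrite /cr; lra.
  have r1 : 0 < cr (sub (a (s (s j0))) q) (sub (a (s j0)) q).
    by move: s1; rewrite /cr; lra.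
  have r0 : 0 < cr (sub (a (s j0)) q) (sub (a j0) q).
    by move: s0; rewrite /cr; lra.
  apply: (hp4 r2 r1 r0 r3 (d := sub p q)); rewrite /cc in g0 g1 g2 g3; lra.
Qed.

Definition piece j := [set p | 0 <= Af j p /\ 0 <= Bf j p /\ Af j p + Bf j p < 1].
Definition fan := [set p | exists j, piece j p].
Definition Cl := [set p | exists j, cTri q (a j) (a (s j)) p].

Lemma cramerF1 j p : p.1 - q.1 = Af j p * ((a j).1 - q.1) + Bf j p * ((a (s j)).1 - q.1).
Proof. by rewrite {1}(cramer1 p (o_neq0 j)) /Af /Bf; ring. Qed.
Lemma cramerF2 j p : p.2 - q.2 = Af j p * ((a j).2 - q.2) + Bf j p * ((a (s j)).2 - q.2).
Proof. by rewrite {1}(cramer2 p (o_neq0 j)) /Af /Bf; ring. Qed.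

Lemma Af_cont j : continuous (Af j). Proof. exact: bA_cont. Qed.
Lemma Bf_cont j : continuous (Bf j). Proof. exact: bB_cont. Qed.
Lemma Sf_cont j : continuous (fun x => 1 - Af j x - Bf j x). Proof. exact: bC_cont. Qed.

Lemma fan_open : (forall j, 0 < o j) \/ (forall j, o j < 0) -> open fan.
Proof.
move=> sg.
have sgp : forall i k, 0 < o i * o k.
  by move=> i k; case: sg => h; have := h i; have := h k; nra.
rewrite openE => p [j [h1 [h2 h3]]]; rewrite /interior.
have hS : 0 < 1 - Af j p - Bf j p by lra.
have nS := nbhs_pos (@Sf_cont j) hS.
case: (ltgtP 0 (Af j p)) => hA; last 2 first.
- by exfalso; lra.
- case: (ltgtP 0 (Bf j p)) => hB; last 2 first.
  + by exfalso; lra.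
  +
    have pq : p = q.
      apply: pt_eq; apply/eqP; rewrite -subr_eq0; apply/eqP;
      by rewrite ?(@cramerF1 j p) ?(@cramerF2 j p) -hA -hB !mul0r addr0.
    have N : forall k, nbhs p [set x | 0 < 1 - Af k x - Bf k x].
      by move=> k; apply: nbhs_pos; [exact: Sf_cont|rewrite pq /Af /Bf bAq bBq; lra].
    apply: filterS (filterI (filterI (N ord0) (N (s ord0))) (filterI (N (s (s ord0))) (N (s (s (s ord0)))))).
    move=> x [[/= n0 n1] [n2 n3]]; rewrite /= in n0 n1 n2 n3.
    have [k [k1 k2]] := cov sg x; exists k; split => //; split => //.
    by case: (ord4_cases k) => [->|[->|[->|->]]]; lra.
  + (* on spoke s j *)
    pose i := s j.
    have e1 := @cramerF1 j p; have e2 := @cramerF2 j p; rewrite -hA mul0r add0r in e1 e2.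
    have Ai : Af i p = Bf j p.
      apply: (mulIf (o_neq0 i)); rewrite AfE /cc /cr /sub /= e1 e2 /o /orient /cr /sub /=; ring.
    have Bi : Bf i p = 0.
      apply: (mulIf (o_neq0 i)); rewrite BfE /cc /cr /sub /= e1 e2 mul0r; ring.
    have n1 := nbhs_pos (@Bf_cont j) hB.
    have n2 : nbhs p [set x | 0 < Af i x] by apply: nbhs_pos; [exact: Af_cont|rewrite Ai].
    have n3 : nbhs p [set x | 0 < 1 - Af i x - Bf i x].
      by apply: nbhs_pos; [exact: Sf_cont|rewrite Ai Bi; lra].
    apply: filterS (filterI (filterI n1 n2) (filterI nS n3)) => x [[x1 x2] [x3 x4]]; rewrite /= in x1 x2 x3 x4.
    case: (lerP 0 (Af j x)) => xa.
      by exists j; split; [lra|split; lra].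
    exists i; split; first lra.
    split; last lra.
    apply/ltW/(sign_trans (Y := o i) (Z := Af j x) (W := o j)) => //.
    by rewrite BfE AfE opprK.
- case: (ltgtP 0 (Bf j p)) => hB; last 2 first.
  + by exfalso; lra.
  + (* on spoke j *)
    pose i := s (s (s j)).
    have si : s i = j by rewrite /i s4_4.
    have e1 := @cramerF1 j p; have e2 := @cramerF2 j p; rewrite -hB mul0r addr0 in e1 e2.
    have Bi : Bf i p = Af j p.
      apply: (mulIf (o_neq0 i)); rewrite BfE /cc /cr /sub /= e1 e2 /o /orient si /cr /sub /=; ring.
    have Ai : Af i p = 0.
      apply: (mulIf (o_neq0 i)); rewrite AfE /cc si /cr /sub /= e1 e2 mul0r; ring.
    have n1 := nbhs_pos (@Af_cont j) hA.
    have n2 : nbhs p [set x | 0 < Bf i x] by apply: nbhs_pos; [exact: Bf_cont|rewrite Bi].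
    have n3 : nbhs p [set x | 0 < 1 - Af i x - Bf i x].
      by apply: nbhs_pos; [exact: Sf_cont|rewrite Ai Bi; lra].
    apply: filterS (filterI (filterI n1 n2) (filterI nS n3)) => x [[x1 x2] [x3 x4]]; rewrite /= in x1 x2 x3 x4.
    case: (lerP 0 (Bf j x)) => xb.
      by exists j; split; [lra|split; lra].
    exists i; split; last by split; lra.
    apply/ltW/(sign_trans (Y := o i) (Z := Bf j x) (W := o j)) => //.
    by rewrite AfE si BfE.
  +
    apply: (@filterS _ _ _ (oTri q (a j) (a (s j)))).
      by move=> x [x1 [x2 x3]]; exists j; split; [apply: ltW|split; [apply: ltW|]].
    by apply: open_nbhs_nbhs; split; [exact: open_openT|split].
Qed.

Lemma Cl_eq : Cl = cTri q (a ord0) (a (s ord0)) `|` cTri q (a (s ord0)) (a (s (s ord0)))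
   `|` cTri q (a (s (s ord0))) (a (s (s (s ord0))))
   `|` cTri q (a (s (s (s ord0)))) (a (s (s (s (s ord0))))).
Proof.
apply/seteqP; split => x.
  by case=> j; case: (ord4_cases j) => [->|[->|[->|->]]] h; [left;left;left|left;left;right|left;right|right].
by case=> [[[h|h]|h]|h]; [exists ord0|exists (s ord0)|exists (s (s ord0))|exists (s (s (s ord0)))].
Qed.

Lemma Cl_closed : closed Cl.
Proof.
rewrite Cl_eq; apply: closedU; [apply: closedU; [apply: closedU|]|]; exact: closed_closedT.
Qed.

Lemma Cl_bounded : bounded_pts Cl.
Proof.
rewrite Cl_eq; apply: bounded_U; [apply: bounded_U; [apply: bounded_U|]|];
  apply: bounded_closedT; apply: o_neq0.
Qed.

Lemma fan_not_outer : (forall j, 0 < o j) \/ (forall j, o j < 0) ->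
  ~ outer_face (drawing (cycle_ends a)) q.
Proof.
move=> sg.
have fC : fan `<=` Cl.
  by move=> x [j [h1 [h2 h3]]]; exists j; split => //; split => //; apply: ltW.
apply: (@encl0 _ (drawing (cycle_ends a)) fan (~` Cl)).
- exact: fan_open.
- exact/closed_openC/Cl_closed.
- by move=> x /fC.
- move=> x nD; case: (pselect (Cl x)) => [[j [h1 [h2 h3]]]|nc]; last by right.
  left; exists j; split => //; split => //.
  rewrite lt_neqAle h3 andbT; apply/negP => /eqP e; apply: nD; exists j => /=.
  rewrite /Af /Bf in e.
  exists (Bf j x); split; first by apply/andP; split; rewrite /Bf; lra.
  have eA : Af j x = 1 - Bf j x by rewrite /Af /Bf; lra.
  apply: pt_eq => /=.
  + by rewrite -[LHS](subrK q.1) (@cramerF1 j x) eA; ring.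
  + by rewrite -[LHS](subrK q.2) (@cramerF2 j x) eA; ring.
- exact: bounded_sub fC Cl_bounded.
- by exists ord0; rewrite /piece /= /Af /Bf bAq bBq; split => //; split => //; lra.
Qed.

Lemma tri_noclos j m : oTri q (a j) (a (s j)) m ->
  ~ closure (outer_face (drawing (wheel_ends a q))) m.
Proof.
apply: (@encl _ (drawing (wheel_ends a q)) (oTri q (a j) (a (s j))) (~` cTri q (a j) (a (s j)))).
- exact: open_openT.
- exact/closed_openC/closed_closedT.
- by move=> x [h1 [h2 h3]] []; split; [apply: ltW|split; [apply: ltW|apply: ltW]].
- move=> x nD; case: (pselect (cTri q (a j) (a (s j)) x)) => [[h1 [h2 h3]]|nc]; last by right.
  left; rewrite /oTri /=.
  have e1 := @cramerF1 j x; have e2 := @cramerF2 j x; rewrite /Af /Bf in e1 e2.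
  split; last split.
  + rewrite lt_neqAle h1 andbT; apply/negP => /eqP e; apply: nD; exists (inr (s j)) => /=.
    apply: (seg_of (t := bB q (a j) (a (s j)) x)).
    * by apply/andP; split; lra.
    * by rewrite e1 -e; ring.
    * by rewrite e2 -e; ring.
  + rewrite lt_neqAle h2 andbT; apply/negP => /eqP e; apply: nD; exists (inr j) => /=.
    apply: (seg_of (t := bA q (a j) (a (s j)) x)).
    * by apply/andP; split; lra.
    * by rewrite e1 -e; ring.
    * by rewrite e2 -e; ring.
  + rewrite lt_neqAle h3 andbT; apply/negP => /eqP e; apply: nD; exists (inl j) => /=.
    exists (bB q (a j) (a (s j)) x); split; first by apply/andP; split; lra.
    have eA : bA q (a j) (a (s j)) x = 1 - bB q (a j) (a (s j)) x by lra.
    apply: pt_eq => /=.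
    * by rewrite -[LHS](subrK q.1) e1 eA; ring.
    * by rewrite -[LHS](subrK q.2) e2 eA; ring.
- apply: (@bounded_sub _ _ (cTri q (a j) (a (s j)))); last by apply: bounded_closedT; apply: o_neq0.
  by move=> x [h1 [h2 h3]]; split; [apply: ltW|split; [apply: ltW|apply: ltW]].
Qed.

Lemma rel4 (j k : 'I_4) : k <> j -> k = s j \/ k = s (s j) \/ k = s (s (s j)).
Proof.
move: j k => [[|[|[|[|?]]]] ?] [[|[|[|[|?]]]] ?] // h;
  try (by exfalso; apply: h; apply: val_inj);
  first [by left; apply: val_inj|by right; left; apply: val_inj|by right; right; apply: val_inj].
Qed.

Lemma good_core k : outer_face (drawing (cycle_ends a)) q ->
  seg (a k) (a (s k)) `<=` closure (outer_face (drawing (wheel_ends a q))) -> outer k.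
Proof.
move=> out clos.
have [[j [hj1 hj2]]|sg] := GM; last by case: (fan_not_outer sg out).
case: (pselect (k = j)) => [->|nkj]; first by split.
exfalso.
have oj := o_neq0 j.
have hm : oTri q (a j) (a (s j)) (mid (a k) (a (s k))).
  move: hj1 hj2; rewrite /oTri /= (@bA_mid q (a j) (a (s j)) (a k) (a (s k)) oj) (@bB_mid q (a j) (a (s j)) (a k) (a (s k)) oj).
  case: (rel4 nkj) => [->|[->|->]].
  - by rewrite bA_y (bB_y oj); lra.
  - by lra.
  - by rewrite s4_4 (bA_x oj) bB_x; lra.
exact: (tri_noclos hm (clos _ (seg_mid _ _))).
Qed.
End Wheel.

Lemma good_key (a : 'I_4 -> pt) k : injective a -> planar_sl (cycle_ends a) ->
  good_edge a k -> exists q, [/\ orient q (a k) (a (succ4 k)) != 0,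
    oTri q (a k) (a (succ4 k)) (a (succ4 (succ4 k))) &
    oTri q (a k) (a (succ4 k)) (a (succ4 (succ4 (succ4 k))))].
Proof.
move=> inj plA [q [out [qa [plW clos]]]].
have [h1 h2] := good_core inj plA plW qa out clos.
by exists q; split => //; exact: (o_neq0 inj plW qa k).
Qed.

Lemma opp_pair (i j k : 'I_4) : i != j -> j != k -> i != k ->
  [|| j == succ4 (succ4 i), k == succ4 (succ4 i) | k == succ4 (succ4 j)].
Proof. by move: i j k => [[|[|[|[|?]]]] ?] [[|[|[|[|?]]]] ?] [[|[|[|[|?]]]] ?]. Qed.

Lemma opp_good (a : 'I_4 -> pt) k : injective a -> planar_sl (cycle_ends a) ->
  good_edge a k -> good_edge a (succ4 (succ4 k)) -> False.
Proof.
move=> inj plA g1 g2.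
have [q [oq h2 h3]] := good_key inj plA g1.
have [q' [oqq g2' g3']] := good_key inj plA g2.
rewrite s4_4 in g2' g3'.
have [s [t [s0 t0 E1 E2 C0]]] := ray oq h2 h3.
have [u [v [u0 v0 E3 E4 _]]] := ray oqq g2' g3'.
have [sv tu] := opp_alg E1 E2 E3 E4 C0.
pose X : pt := ((1 - t) * (a (succ4 k)).1 + t * (a (succ4 (succ4 k))).1,
                (1 - t) * (a (succ4 k)).2 + t * (a (succ4 (succ4 k))).2).
have sX1 : seg (a (succ4 k)) (a (succ4 (succ4 k))) X.
  by apply: seg_pt; apply/andP; split; lra.
have sX2 : seg (a (succ4 (succ4 (succ4 k)))) (a (succ4 (succ4 (succ4 (succ4 k))))) X.
  rewrite s4_4; exists (1 - s); split; first by apply/andP; split; lra.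
  by apply: pt_eq; rewrite /X /=; lra.
have ne : succ4 k <> succ4 (succ4 (succ4 k)).
  by move/s4_inj/esym; apply: s4_2.
have [e1 e2] := planarE (e := succ4 k) (f := succ4 (succ4 (succ4 k))) plA ne sX1 sX2.
rewrite /= s4_4 in e1 e2.
have n1 : a (succ4 k) <> a (succ4 (succ4 (succ4 k))).
  by move/inj/s4_inj/esym; apply: s4_2.
have n2 : a (succ4 k) <> a k by move/inj; apply: s4_1.
have n3 : a (succ4 (succ4 k)) <> a (succ4 (succ4 (succ4 k))).
  by move/inj/s4_inj/s4_inj/esym; apply: s4_1.
have n4 : a (succ4 (succ4 k)) <> a k by move/inj; apply: s4_2.
by case: e1 => e1; case: e2 => e2; congruence.
Qed.

End L8b.

Theorem lemma8 (R : realType) (a : 'I_4 -> R * R) :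
  simple_quadrilateral a ->
  forall i j k : 'I_4, good_edge a i -> good_edge a j -> good_edge a k ->
    i = j \/ j = k \/ i = k.
Proof.
move=> [inj plA] i j k gi gj gk.
case: (eqVneq i j) => [->|ij]; first by left.
case: (eqVneq j k) => [->|jk]; first by right; left.
case: (eqVneq i k) => [->|ik]; first by right; right.
exfalso; case/or3P: (opp_pair ij jk ik) => /eqP e.
- by apply: (opp_good inj plA gi); rewrite -e.
- by apply: (opp_good inj plA gi); rewrite -e.
- by apply: (opp_good inj plA gj); rewrite -e.
Qed.
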